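(* Let $f:\mathbb{Z}^3\to\mathbb{C}$ and define $g(k_1,k_2,k_3,k_4)=\sum_{(l_1,l_2,l_3)}^{(k_1,k_2,k_3,k_4)}f(l_1,l_2,l_3)$. Then \begin{multline*} T'_{2,3}\, g(k_1,k_2,k_3,k_4) = - \frac{1}{2} \left( \sum_{l_1=k_2+1}^{k_3} \sum_{l_2=k_2+1}^{k_3} \sum_{l_3=k_2}^{k_4} T'_{1,2} f(l_1,l_2,l_3) + \sum_{l_1=k_1}^{k_2+1} \sum_{l_2=k_2}^{k_3-1} \sum_{l_3=k_2}^{k_3-1} T'_{2,3} f(l_1,l_2,l_3) \right) \\ + \frac{1}{2} \left( \sum_{l_1=k_2}^{k_3-1} \sum_{l_2=k_2}^{k_3-1} \Delta_2 (\operatorname{id} + E_1) T'_{1,2} f(l_1,l_2,k_2) - \sum_{l_2=k_2}^{k_3-1} \sum_{l_3=k_2}^{k_3-1} \Delta_2 (\operatorname{id} + E_3) T'_{2,3} f(k_2+1,l_2,l_3) \right) \\ + \frac{1}{2} \Big( T'_{1,2} f(k_2,k_2,k_2+1) - T'_{1,2} f(k_2,k_2,k_3+1) + T'_{2,3} f(k_2,k_2,k_2) - T'_{2,3} f(k_3,k_2,k_2) \Big) \\ - T'_{1,2} f(k_2,k_3,k_2+1) - T'_{2,3} f(k_2,k_2,k_3). \end{multline*} Moreover, for every function $h:\mathbb{Z}^2\to\mathbb{C}$, $$T'_{1,2}\left(\sum_{(l_1,l_2)}^{(k_1,k_2,k_3)}h(l_1,l_2)\right)(k_1,k_2,k_3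)=-\frac12\sum_{l_1=k_1}^{k_2-1}\sum_{l_2=k_1}^{k_2-1}T'_{1,2}\,h(l_1,l_2).$$
   Context: Extended interval sums: $\sum_{i=a}^b F(i)=F(a)+\cdots+F(b)$ if $a\le b$, $=0$ if $b=a-1$, and $=-F(b+1)-\cdots-F(a-1)$ if $b+1\le a-1$. For functions $A$ on $\mathbb{Z}^{m-1}$ and $(k_1,\ldots,k_m)\in\mathbb{Z}^m$ define recursively $\sum_{(l_1)}^{(k_1,k_2)}A(l_1)=\sum_{l_1=k_1}^{k_2}A(l_1)$ and, for $m>2$, $$\sum_{(l_1,\ldots,l_{m-1})}^{(k_1,\ldots,k_m)}A=\sum_{(l_1,\ldots,l_{m-2})}^{(k_1,\ldots,k_{m-1})}\sum_{l_{m-1}=k_{m-1}+1}^{k_m}A(l_1,\ldots,l_{m-1})+\sum_{(l_1,\ldots,l_{m-2})}^{(k_1,\ldots,k_{m-1}-1)}A(l_1,\ldots,l_{m-2},k_{m-1}).$$ For a function of several integer variables, $E_j$ is the shift in the $j$-th variable ($E_jF(\ldots,x_j,\ldots)=F(\ldots,x_j+1,\ldots)$), $\Delta_j=E_j-\operatorname{id}$, and $S_{j,j+1}$ swaps the $j$-th and $(j+1)$-st variables; products of operators are compositions. Define $T'_{j,j+1}=(\operatorname{id}+S_{j,j+1})(\operatorname{id}+E_{j+1}\Delta_j)$. Notation such as $T'_{1,2}f(k_2,k_2,k_2+1)$ or $\Delta_2(\operatorname{id}+E_1)T'_{1,2}f(l_1,l_2,k_2)$ means: apply the operator to $f$ as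 a function of all its variables, then evaluate at the indicated arguments. *)

(* Defs.v *)
From mathcomp Require Import all_boot all_order all_algebra.
From mathcomp Require Import complex.
From mathcomp Require Import Rstruct.
Set Implicit Arguments. Unset Strict Implicit. Unset Printing Implicit Defensive.
Import Order.TTheory GRing.Theory Num.Theory.
Local Open Scope ring_scope.

Definition C : fieldType := (Rdefinitions.R)[i].

(* Extended interval sum  \sum_{i=a}^{b} F(i):
   F(a)+...+F(b) if a <= b;  0 if b = a-1;  -F(b+1)-...-F(a-1) if b+1 <= a-1. *)
Definition isum (F : int -> C) (a b : int) : C :=
  if a <= b + 1 then \sum_(j < absz (b + 1 - a)%R) F (a + j%:Z)
  else - \sum_(j < absz (a - 1 - b)%R) F (b + 1 + j%:Z).

Definition msum1 (A : int -> C) (k1 k2 : int) : C := isum A k1 k2.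

Definition msum2 (A : int -> int -> C) (k1 k2 k3 : int) : C :=
  msum1 (fun l1 => isum (fun l2 => A l1 l2) (k2 + 1) k3) k1 k2
  + msum1 (fun l1 => A l1 k2) k1 (k2 - 1).

Definition msum3 (A : int -> int -> int -> C) (k1 k2 k3 k4 : int) : C :=
  msum2 (fun l1 l2 => isum (fun l3 => A l1 l2 l3) (k3 + 1) k4) k1 k2 k3
  + msum2 (fun l1 l2 => A l1 l2 k3) k1 k2 (k3 - 1).

Definition fun2 := int -> int -> C.
Definition fun3 := int -> int -> int -> C.
Definition fun4 := int -> int -> int -> int -> C.

Definition E1_2 (f : fun2) : fun2 := fun x y => f (x + 1) y.
Definition E2_2 (f : fun2) : fun2 := fun x y => f x (y + 1).
Definition D1_2 (f : fun2) : fun2 := fun x y => E1_2 f x y - f x y.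
Definition S12_2 (f : fun2) : fun2 := fun x y => f y x.

Definition E1_3 (f : fun3) : fun3 := fun x y z => f (x + 1) y z.
Definition E2_3 (f : fun3) : fun3 := fun x y z => f x (y + 1) z.
Definition E3_3 (f : fun3) : fun3 := fun x y z => f x y (z + 1).
Definition D1_3 (f : fun3) : fun3 := fun x y z => E1_3 f x y z - f x y z.
Definition D2_3 (f : fun3) : fun3 := fun x y z => E2_3 f x y z - f x y z.
Definition S12_3 (f : fun3) : fun3 := fun x y z => f y x z.
Definition S23_3 (f : fun3) : fun3 := fun x y z => f x z y.

Definition E2_4 (f : fun4) : fun4 := fun x y z w => f x (y + 1) z w.
Definition E3_4 (f : fun4) : fun4 := fun x y z w => f x y (z + 1) w.
Definition D2_4 (f : fun4) : fun4 := fun x y z w => E2_4 f x y z w - f x y z w.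
Definition S23_4 (f : fun4) : fun4 := fun x y z w => f x z y w.

Definition T12_2 (f : fun2) : fun2 :=
  let G : fun2 := fun x y => f x y + E2_2 (D1_2 f) x y in
  fun x y => G x y + S12_2 G x y.

Definition T12_3 (f : fun3) : fun3 :=
  let G : fun3 := fun x y z => f x y z + E2_3 (D1_3 f) x y z in
  fun x y z => G x y z + S12_3 G x y z.

Definition T23_3 (f : fun3) : fun3 :=
  let G : fun3 := fun x y z => f x y z + E3_3 (D2_3 f) x y z in
  fun x y z => G x y z + S23_3 G x y z.

Definition T23_4 (f : fun4) : fun4 :=
  let G : fun4 := fun x y z w => f x y z w + E3_4 (D2_4 f) x y z w in
  fun x y z w => G x y z w + S23_4 G x y z w.

Definition IE1_3 (f : fun3) : fun3 := fun x y z => f x y z + E1_3 f x y z.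
Definition IE3_3 (f : fun3) : fun3 := fun x y z => f x y z + E3_3 f x y z.

(* Main.v *)
Require Import Defs.
From mathcomp Require Import all_boot all_order all_algebra.
From mathcomp Require Import complex.
From mathcomp Require Import Rstruct.
From mathcomp Require Import ring.
From Stdlib Require Import FunctionalExtensionality.
Import Order.TTheory GRing.Theory Num.Theory.
Local Open Scope ring_scope.

Lemma isum_tel (F : int -> C) (S : int -> C) a b :
  (forall n, F n = S (n + 1) - S n) -> isum F a b = S (b + 1) - S a.
Proof.
move=> HF; rewrite /isum.
have tel : forall (c : int) (n : nat),
    \sum_(j < n) F (c + j%:Z) = S (c + n%:Z) - S c.
  move=> c; elim=> [|n IH]; first by rewrite big_ord0 addr0 subrr.
  rewrite big_ord_recr /= IH HF.
  have -> : (c + n.+1%:Z) = c + n%:Z + 1 by rewrite -addn1 PoszD addrA.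
  ring.
case: ifP => Hab.
  rewrite tel; congr (S _ - _).
  rewrite gez0_abs; last by rewrite subr_ge0.
  by rewrite addrC subrK.
rewrite tel.
have -> : b + 1 + (absz (a - 1 - b)%R)%:Z = a.
  rewrite gez0_abs; last first.
    rewrite subr_ge0 lerBrDr. move/negbT: Hab; rewrite -ltNge => /ltW.
    by rewrite addrC.
  ring.
by rewrite opprB.
Qed.

Definition prim (F : int -> C) (n : int) : C :=
  match n with
  | Posz m => \sum_(j < m) F j%:Z
  | Negz m => - \sum_(j < m.+1) F (- (j.+1)%:Z)
  end.

Lemma prim_S F n : prim F (n + 1) - prim F n = F n.
Proof.
case: n => m.
  have -> : (Posz m + 1) = Posz m.+1 by rewrite -addn1 PoszD.
  rewrite /prim big_ord_recr /=; ring.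
case: m => [|m].
  have -> : (Negz 0 + 1) = Posz 0 by [].
  rewrite /prim big_ord0 big_ord_recr big_ord0 /=; ring.
have -> : (Negz m.+1 + 1) = Negz m.
  by rewrite !NegzE -addn1 PoszD opprD addrK.
rewrite /prim (big_ord_recr m.+1) /= NegzE; ring.
Qed.

Definition d1 (X : fun3) : fun3 := fun x y z => X (x + 1) y z - X x y z.
Definition d2 (X : fun3) : fun3 := fun x y z => X x (y + 1) z - X x y z.
Definition d3 (X : fun3) : fun3 := fun x y z => X x y (z + 1) - X x y z.

Lemma prim3 (f : fun3) : exists P, f = d3 (d2 (d1 P)).
Proof.
pose P : fun3 := fun x y z =>
  prim (fun a => prim (fun b => prim (fun c => f a b c) z) y) x.
exists P.
have H1 : forall x y z, d1 P x y z = prim (fun b => prim (fun c => f x b c) z) y.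
  by move=> x y z; rewrite /d1 /P prim_S.
have H2 : forall x y z, d2 (d1 P) x y z = prim (fun c => f x y c) z.
  by move=> x y z; rewrite /d2 !H1 prim_S.
apply: functional_extensionality_dep => x.
apply: functional_extensionality_dep => y.
apply: functional_extensionality_dep => z.
by rewrite /d3 !H2 prim_S.
Qed.

Definition e1 (X : fun2) : fun2 := fun x y => X (x + 1) y - X x y.
Definition e2 (X : fun2) : fun2 := fun x y => X x (y + 1) - X x y.

Lemma prim2 (f : fun2) : exists P, f = e2 (e1 P).
Proof.
pose P : fun2 := fun x y => prim (fun a => prim (fun b => f a b) y) x.
exists P.
have H1 : forall x y, e1 P x y = prim (fun b => f x b) y.
  by move=> x y; rewrite /e1 /P prim_S.
apply: functional_extensionality_dep => x.
apply: functional_extensionality_dep => y.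
by rewrite /e2 !H1 prim_S.
Qed.

Ltac fext3 := apply: functional_extensionality_dep => x;
  apply: functional_extensionality_dep => y;
  apply: functional_extensionality_dep => z.

Lemma comm_T12 X : T12_3 (d3 (d2 (d1 X))) = d3 (d2 (d1 (T12_3 X))).
Proof. fext3; rewrite /T12_3 /S12_3 /E2_3 /D1_3 /E1_3 /d1 /d2 /d3 /=; ring. Qed.
Lemma comm_T23 X : T23_3 (d3 (d2 (d1 X))) = d3 (d2 (d1 (T23_3 X))).
Proof. fext3; rewrite /T23_3 /S23_3 /E3_3 /D2_3 /E2_3 /d1 /d2 /d3 /=; ring. Qed.
Lemma comm_D2 X : D2_3 (d3 (d2 (d1 X))) = d3 (d2 (d1 (D2_3 X))).
Proof. fext3; rewrite /D2_3 /E2_3 /d1 /d2 /d3 /=; ring. Qed.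
Lemma comm_IE1 X : IE1_3 (d3 (d2 (d1 X))) = d3 (d2 (d1 (IE1_3 X))).
Proof. fext3; rewrite /IE1_3 /E1_3 /d1 /d2 /d3 /=; ring. Qed.
Lemma comm_IE3 X : IE3_3 (d3 (d2 (d1 X))) = d3 (d2 (d1 (IE3_3 X))).
Proof. fext3; rewrite /IE3_3 /E3_3 /d1 /d2 /d3 /=; ring. Qed.
Lemma comm_T12_2 X : T12_2 (e2 (e1 X)) = e2 (e1 (T12_2 X)).
Proof.
apply: functional_extensionality_dep => x; apply: functional_extensionality_dep => y.
rewrite /T12_2 /S12_2 /E2_2 /D1_2 /E1_2 /e1 /e2 /=; ring.
Qed.

Lemma B123 Q a1 b1 a2 b2 a3 b3 :
  isum (fun l1 => isum (fun l2 => isum (fun l3 => d3 (d2 (d1 Q)) l1 l2 l3) a3 b3) a2 b2) a1 b1 =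
  Q (b1+1) (b2+1) (b3+1) - Q a1 (b2+1) (b3+1) - Q (b1+1) a2 (b3+1) + Q a1 a2 (b3+1)
  - (Q (b1+1) (b2+1) a3 - Q a1 (b2+1) a3 - Q (b1+1) a2 a3 + Q a1 a2 a3).
Proof.
have I3 : forall l1 l2, isum (fun l3 => d3 (d2 (d1 Q)) l1 l2 l3) a3 b3
    = d2 (d1 Q) l1 l2 (b3+1) - d2 (d1 Q) l1 l2 a3 by move=> *; apply: isum_tel.
have I2 : forall l1, isum (fun l2 => isum (fun l3 => d3 (d2 (d1 Q)) l1 l2 l3) a3 b3) a2 b2
   = d1 Q l1 (b2+1) (b3+1) - d1 Q l1 a2 (b3+1) - (d1 Q l1 (b2+1) a3 - d1 Q l1 a2 a3).
  move=> l1; rewrite (@isum_tel _ (fun m => d1 Q l1 m (b3+1) - d1 Q l1 m a3)).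
    ring.
  by move=> m /=; rewrite I3 /d2; ring.
rewrite (@isum_tel _ (fun n => Q n (b2+1) (b3+1) - Q n a2 (b3+1) - (Q n (b2+1) a3 - Q n a2 a3))).
  ring.
by move=> n /=; rewrite I2 /d1; ring.
Qed.

Lemma B12_3 Q a1 b1 a2 b2 k :
  isum (fun l1 => isum (fun l2 => d3 (d2 (d1 Q)) l1 l2 k) a2 b2) a1 b1 =
  Q (b1+1) (b2+1) (k+1) - Q a1 (b2+1) (k+1) - Q (b1+1) a2 (k+1) + Q a1 a2 (k+1)
  - (Q (b1+1) (b2+1) k - Q a1 (b2+1) k - Q (b1+1) a2 k + Q a1 a2 k).
Proof.
have I2 : forall l1, isum (fun l2 => d3 (d2 (d1 Q)) l1 l2 k) a2 b2
   = d1 Q l1 (b2+1) (k+1) - d1 Q l1 a2 (k+1) - (d1 Q l1 (b2+1) k - d1 Q l1 a2 k).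
  move=> l1; rewrite (@isum_tel _ (fun m => d1 Q l1 m (k+1) - d1 Q l1 m k)).
    ring.
  by move=> m /=; rewrite /d3 /d2; ring.
rewrite (@isum_tel _ (fun n => Q n (b2+1) (k+1) - Q n a2 (k+1) - (Q n (b2+1) k - Q n a2 k))).
  ring.
by move=> n /=; rewrite I2 /d1; ring.
Qed.

Lemma B13_2 Q a1 b1 a3 b3 k :
  isum (fun l1 => isum (fun l3 => d3 (d2 (d1 Q)) l1 k l3) a3 b3) a1 b1 =
  Q (b1+1) (k+1) (b3+1) - Q a1 (k+1) (b3+1) - Q (b1+1) k (b3+1) + Q a1 k (b3+1)
  - (Q (b1+1) (k+1) a3 - Q a1 (k+1) a3 - Q (b1+1) k a3 + Q a1 k a3).
Proof.
have I2 : forall l1, isum (fun l3 => d3 (d2 (d1 Q)) l1 k l3) a3 b3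
   = d1 Q l1 (k+1) (b3+1) - d1 Q l1 k (b3+1) - (d1 Q l1 (k+1) a3 - d1 Q l1 k a3).
  move=> l1; rewrite (@isum_tel _ (fun m => d1 Q l1 (k+1) m - d1 Q l1 k m)).
    ring.
  by move=> m /=; rewrite /d3 /d2; ring.
rewrite (@isum_tel _ (fun n => Q n (k+1) (b3+1) - Q n k (b3+1) - (Q n (k+1) a3 - Q n k a3))).
  ring.
by move=> n /=; rewrite I2 /d1; ring.
Qed.

Lemma B23_1 Q a2 b2 a3 b3 k :
  isum (fun l2 => isum (fun l3 => d3 (d2 (d1 Q)) k l2 l3) a3 b3) a2 b2 =
  Q (k+1) (b2+1) (b3+1) - Q k (b2+1) (b3+1) - Q (k+1) a2 (b3+1) + Q k a2 (b3+1)
  - (Q (k+1) (b2+1) a3 - Q k (b2+1) a3 - Q (k+1) a2 a3 + Q k a2 a3).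
Proof.
have I2 : forall l2, isum (fun l3 => d3 (d2 (d1 Q)) k l2 l3) a3 b3
   = d2 (d1 Q) k l2 (b3+1) - d2 (d1 Q) k l2 a3.
  by move=> l2; apply: isum_tel.
rewrite (@isum_tel _ (fun n => d1 Q k n (b3+1) - d1 Q k n a3)).
  rewrite /d1; ring.
by move=> n /=; rewrite I2 /d2; ring.
Qed.

Lemma B1_23 Q a1 b1 k k' :
  isum (fun l1 => d3 (d2 (d1 Q)) l1 k k') a1 b1 =
  Q (b1+1) (k+1) (k'+1) - Q a1 (k+1) (k'+1) - Q (b1+1) k (k'+1) + Q a1 k (k'+1)
  - (Q (b1+1) (k+1) k' - Q a1 (k+1) k' - Q (b1+1) k k' + Q a1 k k').
Proof.
rewrite (@isum_tel _ (fun n => Q n (k+1) (k'+1) - Q n k (k'+1) - (Q n (k+1) k' - Q n k k'))).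
  ring.
by move=> n /=; rewrite /d1 /d2 /d3; ring.
Qed.

Lemma C12 (Q : fun2) a1 b1 a2 b2 :
  isum (fun l1 => isum (fun l2 => e2 (e1 Q) l1 l2) a2 b2) a1 b1 =
  Q (b1+1) (b2+1) - Q a1 (b2+1) - Q (b1+1) a2 + Q a1 a2.
Proof.
have I2 : forall l1, isum (fun l2 => e2 (e1 Q) l1 l2) a2 b2
   = e1 Q l1 (b2+1) - e1 Q l1 a2 by move=> l1; apply: isum_tel.
rewrite (@isum_tel _ (fun n => Q n (b2+1) - Q n a2)).
  ring.
by move=> n /=; rewrite I2 /e1; ring.
Qed.

Lemma C1_2 (Q : fun2) a1 b1 k :
  isum (fun l1 => e2 (e1 Q) l1 k) a1 b1 =
  Q (b1+1) (k+1) - Q a1 (k+1) - Q (b1+1) k + Q a1 k.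
Proof.
rewrite (@isum_tel _ (fun n => Q n (k+1) - Q n k)).
  ring.
by move=> n /=; rewrite /e1 /e2; ring.
Qed.

Lemma two_neq0 : (2 : C) != 0.
Proof.
have H : (2 : (Rdefinitions.R)[i]) != 0 by rewrite pnatr_eq0.
exact: H.
Qed.

Lemma part2 (h : fun2) (k1 k2 k3 : int) :
    T12_3 (fun a b c => msum2 h a b c) k1 k2 k3 =
      - (1 / 2) * isum (fun l1 => isum (fun l2 => T12_2 h l1 l2) k1 (k2 - 1)) k1 (k2 - 1).
Proof.
have [Q ->] := prim2 h.
rewrite comm_T12_2 C12.
rewrite /T12_3 /S12_3 /E2_3 /D1_3 /E1_3 /msum2 /msum1; cbv beta.
rewrite !C12 !C1_2.
rewrite /T12_2 /S12_2 /E2_2 /D1_2 /E1_2; cbv beta.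
rewrite ?subrK ?addrK.
by field.
Qed.

Lemma part1 (f : fun3) (k1 k2 k3 k4 : int) :
    let g : fun4 := fun a b c d => msum3 f a b c d in
    T23_4 g k1 k2 k3 k4 =
      - (1 / 2) *
        ( isum (fun l1 => isum (fun l2 => isum (fun l3 =>
              T12_3 f l1 l2 l3) k2 k4) (k2 + 1) k3) (k2 + 1) k3
        + isum (fun l1 => isum (fun l2 => isum (fun l3 =>
              T23_3 f l1 l2 l3) k2 (k3 - 1)) k2 (k3 - 1)) k1 (k2 + 1) )
      + (1 / 2) *
        ( isum (fun l1 => isum (fun l2 =>
              D2_3 (IE1_3 (T12_3 f)) l1 l2 k2) k2 (k3 - 1)) k2 (k3 - 1)
        - isum (fun l2 => isum (fun l3 =>
              D2_3 (IE3_3 (T23_3 f)) (k2 + 1) l2 l3) k2 (k3 - 1)) k2 (k3 - 1) )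
      + (1 / 2) *
        ( T12_3 f k2 k2 (k2 + 1) - T12_3 f k2 k2 (k3 + 1)
        + T23_3 f k2 k2 k2 - T23_3 f k3 k2 k2 )
      - T12_3 f k2 k3 (k2 + 1) - T23_3 f k2 k2 k3.
Proof.
move=> g; subst g.
have [P ->] := prim3 f.
rewrite !comm_T12 !comm_T23 !comm_IE1 !comm_IE3 !comm_D2.
rewrite B123 B123 B12_3 B23_1.
rewrite /T23_4 /S23_4 /E3_4 /D2_4 /E2_4 /msum3 /msum2 /msum1; cbv beta.
rewrite !B123 !B13_2 !B12_3 !B1_23.
rewrite /IE1_3 /IE3_3 /D2_3 /d1 /d2 /d3 /T12_3 /S12_3 /E2_3 /D1_3 /E1_3 /T23_3 /S23_3 /E3_3 /D2_3 /E2_3 /IE1_3 /IE3_3; cbv beta.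
rewrite ?subrK ?addrK.
by field.
Qed.

Theorem lemma3 :
  (forall (f : fun3) (k1 k2 k3 k4 : int),
    let g : fun4 := fun a b c d => msum3 f a b c d in
    T23_4 g k1 k2 k3 k4 =
      - (1 / 2) *
        ( isum (fun l1 => isum (fun l2 => isum (fun l3 =>
              T12_3 f l1 l2 l3) k2 k4) (k2 + 1) k3) (k2 + 1) k3
        + isum (fun l1 => isum (fun l2 => isum (fun l3 =>
              T23_3 f l1 l2 l3) k2 (k3 - 1)) k2 (k3 - 1)) k1 (k2 + 1) )
      + (1 / 2) *
        ( isum (fun l1 => isum (fun l2 =>
              D2_3 (IE1_3 (T12_3 f)) l1 l2 k2) k2 (k3 - 1)) k2 (k3 - 1)
        - isum (fun l2 => isum (fun l3 =>
              D2_3 (IE3_3 (T23_3 f)) (k2 + 1) l2 l3) k2 (k3 - 1)) k2 (k3 - 1) )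
      + (1 / 2) *
        ( T12_3 f k2 k2 (k2 + 1) - T12_3 f k2 k2 (k3 + 1)
        + T23_3 f k2 k2 k2 - T23_3 f k3 k2 k2 )
      - T12_3 f k2 k3 (k2 + 1) - T23_3 f k2 k2 k3)
  /\
  (forall (h : fun2) (k1 k2 k3 : int),
    T12_3 (fun a b c => msum2 h a b c) k1 k2 k3 =
      - (1 / 2) * isum (fun l1 => isum (fun l2 => T12_2 h l1 l2) k1 (k2 - 1)) k1 (k2 - 1)).
Proof.
split; [exact: part1 | exact: part2].
Qed.
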